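(* Consider the model without monotonicity, parametrized by $\boldsymbol{\xi}=(\boldsymbol{p},\boldsymbol{\alpha},\boldsymbol{\pi},\boldsymbol{\delta})$ ranging over the open set $\Xi$ where $\boldsymbol{p}=(p_1,\dots,p_{N_R})$ lies in the open probability simplex, $\alpha_r\in(0,1)$ for each $r$, $\boldsymbol{\pi}_r=(\pi_{ss,r},\pi_{s\bar{s},r},\pi_{\bar{s}\bar{s},r},\pi_{\bar{s}s,r})$ lies in the open probability simplex for each $r$, and $\delta_{zu}\in(0,1)$ for $z\in\{0,1\}$, $u\in\{ss,s\bar{s},\bar{s}\bar{s},\bar{s}s\}$ (so $\Xi$ has dimension $5N_R+7$). Let $f:\Xi\to\mathbb{R}^{8N_R}$ map $\boldsymbol{\xi}$ to the observed cell probabilities $$P(R=r,Z=z,S=s,Y=y)=p_r\,\alpha_r^{z}(1-\alpha_r)^{1-z}\sum_{u\in O(z,s)}\pi_{ur}\,\delta_{zu}^{y}(1-\delta_{zu})^{1-y},$$ for $r\in\{1,\dots,N_R\}$, $z,s,y\in\{0,1\}$. If $N_R\le 2$, then $\boldsymbol{\xi}$ is not locally identifiable at any $\boldsymbol{\xi}_0\in\Xi$: every neighborhood of $\boldsymbol{\xi}_0$ contains some $\boldsymbol{\xi}\neq\boldsymbol{\xi}_0$ with $f(\boldsymbol{\xi})=f(\boldsymbol{\xi}_0)$. Consequently $N_R\ge 3$ is necessary for local identifiability.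
   Context: This parametrization is the joint distribution of $(R,Z,U,Y)$ implied by Assumption 1 (randomization: $Z\perp\!\!\!\perp\{S(1),S(0),Y(1),Y(0)\}\mid R$) and Assumption 3 (homogeneity: $R\perp\!\!\!\perp Y(z)\mid U$), with $p_r=P(R=r)$, $\alpha_r=P(Z=1\mid R=r)$, $\pi_{ur}=P(U=u\mid R=r)$, $\delta_{zu}=P(Y=1\mid Z=z,U=u)$. Here $U=(S(1),S(0))$ with values $(1,1),(1,0),(0,1),(0,0)$ labeled $ss,s\bar{s},\bar{s}s,\bar{s}\bar{s}$, and $S=S(Z)$. $O(z,s)$ is the set of strata compatible with observing $Z=z,S=s$: $O(1,1)=\{ss,s\bar{s}\}$, $O(1,0)=\{\bar{s}\bar{s},\bar{s}s\}$, $O(0,1)=\{ss,\bar{s}s\}$, $O(0,0)=\{s\bar{s},\bar{s}\bar{s}\}$. The observed cell probabilities sum to one, so they lie in an affine space of dimension $8N_R-1$. *)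

(* Defs.v *)
From Stdlib Require Import Reals List.
Open Scope R_scope.

(* Principal strata U = (S(1),S(0)): ss, s sbar, sbar sbar, sbar s. *)
Inductive stratum : Type := u_ss | u_ssb | u_sbsb | u_sbs.

Definition all_strata : list stratum := u_ss :: u_ssb :: u_sbsb :: u_sbs :: nil.

Definition Obs (z s : bool) : list stratum :=
  match z, s with
  | true, true => u_ss :: u_ssb :: nil
  | true, false => u_sbsb :: u_sbs :: nil
  | false, true => u_ss :: u_sbs :: nil
  | false, false => u_ssb :: u_sbsb :: nil
  end.

Definition bern (a : R) (x : bool) : R := a ^ (Nat.b2n x) * (1 - a) ^ (1 - Nat.b2n x).

Fixpoint sumN (f : nat -> R) (n : nat) : R :=
  match n with O => 0 | S k => sumN f k + f k end.

Definition sumL (f : stratum -> R) (l : list stratum) : R :=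
  fold_right (fun u acc => f u + acc) 0 l.

(* Parameter xi = (p, alpha, pi, delta); strata indices r = 0..NR-1. *)
Record param : Type := mkParam {
  pp : nat -> R;
  alpha : nat -> R;                 (* alpha_r = P(Z=1|R=r) *)
  ppi : nat -> stratum -> R;        (* pi_{u r} = P(U=u|R=r) *)
  delta : bool -> stratum -> R      (* delta_{z u} = P(Y=1|Z=z,U=u) *)
}.

Definition in_Xi (NR : nat) (x : param) : Prop :=
  (forall r, (r < NR)%nat -> 0 < pp x r) /\ sumN (pp x) NR = 1 /\
  (forall r, (r < NR)%nat -> 0 < alpha x r < 1) /\
  (forall r, (r < NR)%nat ->
     (forall u, 0 < ppi x r u) /\ sumL (ppi x r) all_strata = 1) /\
  (forall z u, 0 < delta x z u < 1).

Definition cell (x : param) (r : nat) (z s y : bool) : R :=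
  pp x r * bern (alpha x r) z *
  sumL (fun u => ppi x r u * bern (delta x z u) y) (Obs z s).

Definition same_obs (NR : nat) (x x0 : param) : Prop :=
  forall r z s y, (r < NR)%nat -> cell x r z s y = cell x0 r z s y.

Definition close (NR : nat) (eps : R) (x x0 : param) : Prop :=
  (forall r, (r < NR)%nat ->
     Rabs (pp x r - pp x0 r) < eps /\ Rabs (alpha x r - alpha x0 r) < eps /\
     (forall u, Rabs (ppi x r u - ppi x0 r u) < eps)) /\
  (forall z u, Rabs (delta x z u - delta x0 z u) < eps).

(* x and x0 are equal as points of Xi (only indices r < NR are meaningful). *)
Definition param_eq (NR : nat) (x x0 : param) : Prop :=
  (forall r, (r < NR)%nat ->
     pp x r = pp x0 r /\ alpha x r = alpha x0 r /\ (forall u, ppi x r u = ppi x0 r u)) /\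
  (forall z u, delta x z u = delta x0 z u).

(* Main.v *)
Require Import Defs.
From Stdlib Require Import Reals List Lra Psatz Classical.
Open Scope R_scope.

Definition sg (u : stratum) : R :=
  match u with u_ss => 1 | u_ssb => -1 | u_sbsb => 1 | u_sbs => -1 end.

Definition partner (z : bool) (u : stratum) : stratum :=
  if z then match u with u_ss => u_ssb | u_ssb => u_ss | u_sbsb => u_sbs | u_sbs => u_sbsb end
  else match u with u_ss => u_sbs | u_sbs => u_ss | u_ssb => u_sbsb | u_sbsb => u_ssb end.

Definition seqb (u v : stratum) : bool :=
  match u, v with
  | u_ss, u_ss | u_ssb, u_ssb | u_sbsb, u_sbsb | u_sbs, u_sbs => true
  | _, _ => false end.

Definition lmin (d : R) (l : list R) : R := fold_right Rmin d l.

Lemma lmin_le : forall l d v, In v l -> lmin d l <= v.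
Proof.
  induction l as [|a l IH]; simpl; intros d v H; [destruct H|].
  destruct H as [<-|H]; [apply Rmin_l|].
  eapply Rle_trans; [apply Rmin_r| apply IH; exact H].
Qed.

Lemma lmin_led : forall l d, lmin d l <= d.
Proof.
  induction l as [|a l IH]; simpl; intros d; [lra|].
  eapply Rle_trans; [apply Rmin_r| apply IH].
Qed.

Lemma lmin_pos : forall l d, 0 < d -> (forall v, In v l -> 0 < v) -> 0 < lmin d l.
Proof.
  induction l as [|a l IH]; simpl; intros d Hd H; [lra|].
  apply Rmin_glb_lt; [apply H; auto| apply IH; auto].
Qed.

Definition allzu (f : bool -> stratum -> R) : list R :=
  map (f true) all_strata ++ map (f false) all_strata.

Lemma allzu_in f z u : In (f z u) (allzu f).
Proof. destruct z, u; simpl; tauto. Qed.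

Lemma allzu_pos f : (forall z u, 0 < f z u) -> forall v, In v (allzu f) -> 0 < v.
Proof.
  intros H v Hv. unfold allzu in Hv. simpl in Hv.
  repeat (destruct Hv as [<-|Hv]; [apply H|]). destruct Hv.
Qed.

Lemma bern_t a : bern a true = a.
Proof. unfold bern; simpl; ring. Qed.
Lemma bern_f a : bern a false = 1 - a.
Proof. unfold bern; simpl; ring. Qed.

Lemma pair_le (f : stratum -> R) : (forall u, 0 < f u) -> sumL f all_strata = 1 ->
  forall z u, 0 <= f u + f (partner z u) <= 1 /\ f u <= 1.
Proof.
  intros H1 H2 z u. unfold sumL in H2; simpl in H2.
  pose proof (H1 u_ss); pose proof (H1 u_ssb); pose proof (H1 u_sbsb); pose proof (H1 u_sbs).
  destruct z, u; simpl; lra.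
Qed.

Lemma Rabs_le_b x y : Rabs x <= y -> - y <= x <= y.
Proof. unfold Rabs; destruct (Rcase_abs x); lra. Qed.

Lemma sumN0 f : sumN f 0 = 0.
Proof. reflexivity. Qed.

Lemma degen NR x0 (hx : in_Xi NR x0) (hNR : (0 < NR)%nat) eps (he : 0 < eps) z u
  (hdeg : forall r, (r < NR)%nat ->
     ppi x0 r u * ppi x0 0 (partner z u) = ppi x0 r (partner z u) * ppi x0 0 u) :
  exists x : param, in_Xi NR x /\ close NR eps x x0 /\ ~ param_eq NR x x0 /\
    same_obs NR x x0.
Proof.
  destruct hx as (hp & hs & ha & hpi & hd).
  set (m := lmin eps (allzu (delta x0) ++ allzu (fun z u => 1 - delta x0 z u))).
  assert (hm : 0 < m).
  { apply lmin_pos; auto. intros v Hv. apply in_app_or in Hv. destruct Hv as [Hv|Hv];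
    eapply allzu_pos; try exact Hv; intros z' u'; simpl; specialize (hd z' u'); lra. }
  assert (hmd : forall z u, m <= delta x0 z u /\ m <= 1 - delta x0 z u).
  { intros z' u'; split; apply lmin_le; apply in_or_app;
    [left; apply (allzu_in (delta x0)) | right; apply (allzu_in (fun z u => 1 - delta x0 z u))]. }
  assert (hme : m <= eps) by apply lmin_led.
  destruct (hpi 0%nat hNR) as [hpos hsum].
  pose proof (pair_le _ hpos hsum z u) as [_ hu1].
  pose proof (pair_le _ hpos hsum z (partner z u)) as [_ hu2].
  pose proof (hpos u) as hu0. pose proof (hpos (partner z u)) as hu3.
  set (k := m / 2).
  set (a := ppi x0 0 (partner z u)) in *. set (b := ppi x0 0 u) in *.
  exists (mkParam (pp x0) (alpha x0) (ppi x0)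
    (fun z' v => if andb (Bool.eqb z' z) (seqb v u) then delta x0 z' v + k * a
      else if andb (Bool.eqb z' z) (seqb v (partner z u)) then delta x0 z' v - k * b
      else delta x0 z' v)).
  assert (hdz : forall z' v, Rabs ((if andb (Bool.eqb z' z) (seqb v u) then delta x0 z' v + k * a
      else if andb (Bool.eqb z' z) (seqb v (partner z u)) then delta x0 z' v - k * b
      else delta x0 z' v) - delta x0 z' v) <= m / 2).
  { intros z' v.
    assert (hka : 0 <= k * a <= m / 2) by (unfold k; split; [apply Rmult_le_pos|]; nra).
    assert (hkb : 0 <= k * b <= m / 2) by (unfold k; split; [apply Rmult_le_pos|]; nra).
    destruct (andb (Bool.eqb z' z) (seqb v u)); [|destruct (andb (Bool.eqb z' z) (seqb v (partner z u)))].
    - replace (delta x0 z' v + k * a - delta x0 z' v) with (k*a) by ring.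
      rewrite Rabs_pos_eq; lra.
    - replace (delta x0 z' v - k * b - delta x0 z' v) with (-(k*b)) by ring.
      rewrite Rabs_Ropp, Rabs_pos_eq; lra.
    - replace (delta x0 z' v - delta x0 z' v) with 0 by ring. rewrite Rabs_R0; lra. }
  split; [|split; [|split]].
  - unfold in_Xi; simpl. split; [exact hp|]. split; [exact hs|]. split; [exact ha|].
    split; [exact hpi|]. intros z' v. specialize (hdz z' v). specialize (hmd z' v).
    apply Rabs_le_b in hdz. lra.
  - unfold close; simpl. split.
    + intros r hr. repeat split; try (rewrite Rminus_diag, Rabs_R0; lra).
      intro v; rewrite Rminus_diag, Rabs_R0; lra.
    + intros z' v. specialize (hdz z' v). lra.
  - intros [_ H]. specialize (H z u). simpl in H.
    rewrite Bool.eqb_reflx in H.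
    assert (hsu : seqb u u = true) by (destruct u; reflexivity).
    rewrite hsu in H. simpl in H. unfold k in H.
    pose proof (Rmult_lt_0_compat (m/2) _ ltac:(lra) hu3); lra.
  - intros r z' s y hr. specialize (hdeg r hr). unfold cell; simpl.
    assert (H2 := f_equal (fun t => pp x0 r * bern (alpha x0 r) z' * k * t) hdeg).
    simpl in H2. fold a b in hdeg, H2.
    destruct y; rewrite ?bern_t, ?bern_f;
    destruct z, u, z', s; simpl in *; fold a b in H2 |- *; unfold sumL; simpl;
      rewrite ?bern_t, ?bern_f in *; lra.
Qed.

Definition D0 x z u := ppi x 0 u * ppi x 1 (partner z u) - ppi x 0 (partner z u) * ppi x 1 u.
Definition Dt x t z u := D0 x z u + sg u * t * (ppi x 1 u + ppi x 1 (partner z u)).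
Definition Dl x t z u := sg u * (delta x z u - delta x z (partner z u)) * t * ppi x 1 (partner z u) / Dt x t z u.

Lemma Rabs_sg u : Rabs (sg u) = 1.
Proof. destruct u; simpl; unfold Rabs; destruct Rcase_abs; lra. Qed.

Lemma dbound s c t y D A K : (s = 1 \/ s = -1) -> Rabs c <= 1 -> 0 <= y <= 1 -> 0 <= A <= 1 ->
  0 < t -> 0 < K -> K <= Rabs D -> 2 * t <= K ->
  D + s * t * A <> 0 /\ Rabs (s * c * t * y / (D + s * t * A)) <= 2 * t / K.
Proof.
  intros hs hc hy hA ht hK hKD htK.
  assert (hD : K / 2 <= Rabs (D + s * t * A)).
  { revert hKD; unfold Rabs; destruct (Rcase_abs D); destruct (Rcase_abs (D + s*t*A));
    destruct hs; subst; intros; nra. }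
  assert (hnz : D + s * t * A <> 0).
  { intro E. rewrite E, Rabs_R0 in hD. lra. }
  split; [exact hnz|].
  unfold Rdiv at 1. rewrite Rabs_mult, Rabs_inv. fold (Rdiv (Rabs (s * c * t * y)) (Rabs (D + s * t * A))).
  assert (hN : Rabs (s * c * t * y) <= t).
  { rewrite !Rabs_mult. assert (Rabs s = 1) by (destruct hs; subst; unfold Rabs; destruct Rcase_abs; lra).
    rewrite H, (Rabs_pos_eq t) by lra. rewrite (Rabs_pos_eq y) by lra.
    assert (0 <= Rabs c) by apply Rabs_pos. assert (Rabs c * y <= 1) by nra. nra. }
  apply Rle_trans with (t / (K / 2)).
  - unfold Rdiv. apply Rmult_le_compat; try lra.
    + apply Rabs_pos.
    + left; apply Rinv_0_lt_compat; lra.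
    + apply Rinv_le_contravar; lra.
  - right; field; lra.
Qed.

Lemma cramer x0 (hx : in_Xi 2 x0) eps (he : 0 < eps) (hD : forall z u, D0 x0 z u <> 0) :
  exists x : param, in_Xi 2 x /\ close 2 eps x x0 /\ ~ param_eq 2 x x0 /\
    same_obs 2 x x0.
Proof.
  destruct hx as (hp & hs & ha & hpi & hd).
  destruct (hpi 0%nat ltac:(lia)) as [hpos0 hsum0].
  destruct (hpi 1%nat ltac:(lia)) as [hpos1 hsum1].
  set (m := lmin eps (allzu (delta x0) ++ allzu (fun z u => 1 - delta x0 z u)
                      ++ map (ppi x0 0) all_strata)).
  assert (hm : 0 < m).
  { apply lmin_pos; auto. intros v Hv. apply in_app_or in Hv. destruct Hv as [Hv|Hv].
    - eapply allzu_pos; try exact Hv; intros z' u'; simpl; specialize (hd z' u'); lra.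
    - apply in_app_or in Hv. destruct Hv as [Hv|Hv].
      + eapply allzu_pos; try exact Hv; intros z' u'; simpl; specialize (hd z' u'); lra.
      + apply in_map_iff in Hv. destruct Hv as [w [<- _]]. apply hpos0. }
  assert (hmd : forall z u, m <= delta x0 z u /\ m <= 1 - delta x0 z u /\ m <= ppi x0 0 u).
  { intros z' u'; split; [|split]; apply lmin_le; apply in_or_app;
    [left; apply (allzu_in (delta x0)) | right; apply in_or_app; left;
      apply (allzu_in (fun z u => 1 - delta x0 z u)) | right; apply in_or_app; right;
      apply in_map; destruct u'; simpl; tauto]. }
  assert (hme : m <= eps) by apply lmin_led.
  set (K := lmin 1 (allzu (fun z u => Rabs (D0 x0 z u)))).
  assert (hK : 0 < K).
  { apply lmin_pos; [lra|]. apply allzu_pos. intros; apply Rabs_pos_lt, hD. }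
  assert (hK1 : K <= 1) by apply lmin_led.
  assert (hKD : forall z u, K <= Rabs (D0 x0 z u)).
  { intros; apply lmin_le, (allzu_in (fun z u => Rabs (D0 x0 z u))). }
  assert (hm1 : m <= 1) by (destruct (hmd true u_ss) as [h1 [h2 _]]; pose proof (hd true u_ss); lra).
  set (t := m * K / 4).
  assert (ht : 0 < t) by (unfold t; apply Rmult_lt_0_compat; [apply Rmult_lt_0_compat|]; lra).
  assert (htK : 2 * t <= K) by (unfold t; nra).
  assert (htm : t <= m / 4) by (unfold t; nra).
  assert (hb : forall z u, Dt x0 t z u <> 0 /\ Rabs (Dl x0 t z u) <= m / 2).
  { intros z u. unfold Dl, Dt.
    destruct (pair_le _ hpos1 hsum1 z u) as [hA _].
    destruct (pair_le _ hpos1 hsum1 z (partner z u)) as [_ hy].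
    pose proof (hpos1 (partner z u)). pose proof (hd z u). pose proof (hd z (partner z u)).
    destruct (dbound (sg u) (delta x0 z u - delta x0 z (partner z u)) t
       (ppi x0 1 (partner z u)) (D0 x0 z u) (ppi x0 1 u + ppi x0 1 (partner z u)) K)
      as [h1 h2]; auto.
    - destruct u; simpl; auto.
    - unfold Rabs; destruct Rcase_abs; lra.
    - split; lra.
    - split; [exact h1|]. eapply Rle_trans; [exact h2|].
      unfold t. right; field; lra. }
  exists (mkParam (pp x0) (alpha x0)
    (fun r u => if Nat.eqb r 0 then ppi x0 r u + sg u * t else ppi x0 r u)
    (fun z u => delta x0 z u - Dl x0 t z u)).
  split; [|split; [|split]].
  - unfold in_Xi; simpl. split; [exact hp|]. split; [exact hs|]. split; [exact ha|].
    split.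
    + intros r hr. destruct r as [|[|r]]; [|simpl; auto|lia].
      simpl. split.
      * intro u. destruct (hmd true u) as [_ [_ h]]. destruct u; simpl in *; lra.
      * revert hsum0. unfold sumL; simpl. lra.
    + intros z u. destruct (hb z u) as [_ h]. apply Rabs_le_b in h.
      destruct (hmd z u) as [h1 [h2 _]]. lra.
  - unfold close; simpl. split.
    + intros r hr. repeat split; try (rewrite Rminus_diag, Rabs_R0; lra).
      intro u. destruct r as [|r]; simpl.
      * replace (ppi x0 0 u + sg u * t - ppi x0 0 u) with (sg u * t) by ring.
        rewrite Rabs_mult, Rabs_sg, Rabs_pos_eq; lra.
      * rewrite Rminus_diag, Rabs_R0; lra.
    + intros z u. destruct (hb z u) as [_ h].
      replace (delta x0 z u - Dl x0 t z u - delta x0 z u) with (- Dl x0 t z u) by ring.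
      rewrite Rabs_Ropp. lra.
  - intros [H _]. destruct (H 0%nat ltac:(lia)) as [_ [_ H2]]. specialize (H2 u_ss).
    simpl in H2. lra.
  - intros r z s y hr.
    pose proof (fun z u => proj1 (hb z u)) as hDt. clear hb.
    pose proof (hDt true u_ss). pose proof (hDt true u_ssb).
    pose proof (hDt true u_sbsb). pose proof (hDt true u_sbs).
    pose proof (hDt false u_ss). pose proof (hDt false u_ssb).
    pose proof (hDt false u_sbsb). pose proof (hDt false u_sbs).
    unfold cell, Dl, Dt, D0 in *; simpl in *.
    destruct r as [|[|r]]; [| |lia]; simpl;
    destruct y, z, s; unfold sumL; simpl; rewrite ?bern_t, ?bern_f;
    field; repeat split; intro E; match goal with h : _ <> 0 |- _ => apply h; lra end.
Qed.

Theorem proposition2 (NR : nat) (hNR : (NR <= 2)%nat) (x0 : param) (hx0 : in_Xi NR x0) :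
  forall eps : R, 0 < eps ->
  exists x : param, in_Xi NR x /\ close NR eps x x0 /\ ~ param_eq NR x x0 /\
    same_obs NR x x0.
Proof.
  intros eps he.
  destruct NR as [|[|[|NR]]]; [| | |lia].
  - destruct hx0 as (_ & hs & _). simpl in hs. lra.
  - apply (degen 1 x0 hx0 ltac:(lia) eps he true u_ss).
    intros r hr. assert (r = 0%nat) by lia. subst. ring.
  - destruct (Classical_Prop.classic (exists z u, D0 x0 z u = 0)) as [[z [u hz]]|hn].
    + apply (degen 2 x0 hx0 ltac:(lia) eps he z u).
      intros r hr. destruct r as [|[|r]]; [ring| |lia].
      unfold D0 in hz. lra.
    + apply cramer; auto. intros z u hz. apply hn. exists z, u. exact hz.
Qed.
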